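(* Let $d\ge1$ and let $C$ be a $(d+1)$-dimensional copula which is $\mathrm{LTD}^1_{d+1}$. Let $(U_1,\ldots,U_d,V)\sim C$, fix $\boldsymbol\alpha=(\alpha_1,\ldots,\alpha_d)\in[0,1)^d$ with $C(\alpha_1,\ldots,\alpha_d,1)<1$, and let $A_{\boldsymbol U}=\{\exists\, i:U_i>\alpha_i\}$. Then $V\le_{\rm st}V\mid A_{\boldsymbol U}$.
   Context: A $(d+1)$-dimensional copula $C$ is $\mathrm{LTD}^1_{d+1}$ if, for $(U_1,\ldots,U_d,V)\sim C$, $P(U_1\le u_1,\ldots,U_d\le u_d\mid V\le v)$ is nonincreasing in $v\in(0,1]$ for all $u_1,\ldots,u_d$ (i.e. $C(u_1,\ldots,u_d,v)/v$ is nonincreasing in $v$). $V\mid A$ denotes a random variable with the conditional distribution of $V$ given $A$. $Z_1\le_{\rm st}Z_2$ means $P(Z_1>x)\le P(Z_2>x)$ for all $x$. *)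

(* Defs.v *)
From HB Require Import structures.
From mathcomp Require Import all_boot all_order all_algebra.
From mathcomp Require Import all_classical all_reals all_analysis.
Set Implicit Arguments. Unset Strict Implicit. Unset Printing Implicit Defensive.
Import Order.TTheory GRing.Theory Num.Theory.
Local Open Scope classical_set_scope.
Local Open Scope ring_scope.

Definition prob (d0 : measure_display) (T : measurableType d0) (R : realType)
  (P : probability T R) (A : set T) : R := fine (P A).

Definition distributed_as (d0 : measure_display) (T : measurableType d0)
  (R : realType) (P : probability T R) (d : nat)
  (U : 'I_d -> {RV P >-> R}) (V : {RV P >-> R}) (C : ('I_d -> R) -> R -> R) :=
  forall (u : 'I_d -> R) (v : R), (forall i, 0 <= u i <= 1) -> 0 <= v <= 1 ->
    C u v = prob P [set t | (forall i, U i t <= u i) /\ V t <= v].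

(* All marginals are uniform on [0,1]; together with [distributed_as] this says
   that C is a (d+1)-dimensional copula and (U,V) ~ C. *)
Definition uniform_marginals (d0 : measure_display) (T : measurableType d0)
  (R : realType) (P : probability T R) (d : nat)
  (U : 'I_d -> {RV P >-> R}) (V : {RV P >-> R}) :=
  (forall i (x : R), 0 <= x <= 1 -> prob P [set t | U i t <= x] = x) /\
  (forall x : R, 0 <= x <= 1 -> prob P [set t | V t <= x] = x).

Definition LTD1 (R : realType) (d : nat) (C : ('I_d -> R) -> R -> R) :=
  forall u : 'I_d -> R, (forall i, 0 <= u i <= 1) ->
  forall v1 v2 : R, 0 < v1 -> v1 <= v2 -> v2 <= 1 -> C u v2 / v2 <= C u v1 / v1.

Definition cond_prob (d0 : measure_display) (T : measurableType d0)
  (R : realType) (P : probability T R) (B A : set T) : R :=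
  prob P (B `&` A) / prob P A.

(* Main.v *)
Require Import Defs.
From HB Require Import structures.
From mathcomp Require Import all_boot all_order all_algebra.
From mathcomp Require Import all_classical all_reals all_analysis.
From mathcomp Require Import ring lra.
Import Order.TTheory GRing.Theory Num.Theory.
Local Open Scope classical_set_scope.
Local Open Scope ring_scope.

Section H.
Context (d0 : measure_display) (T : measurableType d0) (R : realType) (P : probability T R).

Lemma probE (A : set T) : measurable A -> P A = (prob P A)%:E.
Proof. by move=> mA; rewrite /prob fineK // fin_num_measure. Qed.

Lemma prob_ge0 (A : set T) : 0 <= prob P A.
Proof. by rewrite /prob fine_ge0. Qed.

Lemma prob_le (A B : set T) : measurable A -> measurable B -> A `<=` B -> prob P A <= prob P B.
Proof.
move=> mA mB AB; rewrite -lee_fin -!probE //.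
by apply: le_measure => //; rewrite inE.
Qed.

Lemma prob_setT : prob P setT = 1.
Proof. by rewrite /prob probability_setT. Qed.

Lemma prob_split (A B : set T) : measurable A -> measurable B ->
  prob P A = prob P (A `&` B) + prob P (A `&` ~` B).
Proof.
move=> mA mB.
have mAB : measurable (A `&` B) by exact: measurableI.
have mAC : measurable (A `&` ~` B) by apply: measurableI => //; exact: measurableC.
apply: EFin_inj; rewrite EFinD -!probE //.
rewrite -measureU //; last by rewrite -setIIr setICr setI0.
by rewrite -setIUr setUv setIT.
Qed.
End H.

Lemma mle (d0 : measure_display) (T : measurableType d0) (R : realType) (P : probability T R)
  (V : {RV P >-> R}) (x : R) : measurable [set t | V t <= x].
Proof.
have -> : [set t | V t <= x] = V @^-1` [set` `]-oo, x]].
  by apply/seteqP; split=> t /=; rewrite in_itv /=.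
exact: measurable_funPTI.
Qed.

Theorem lemmaB2 (d0 : measure_display) (T : measurableType d0) (R : realType)
  (P : probability T R) (d : nat) (U : 'I_d -> {RV P >-> R}) (V : {RV P >-> R})
  (C : ('I_d -> R) -> R -> R) (alpha : 'I_d -> R) :
  (0 < d)%N ->
  uniform_marginals U V ->
  distributed_as U V C ->
  LTD1 C ->
  (forall i, 0 <= alpha i < 1) ->
  C alpha 1 < 1 ->
  forall x : R,
    prob P [set t | x < V t] <=
    cond_prob P [set t | x < V t] [set t | exists i, alpha i < U i t].
Proof.
move=> _ [_ HV] HC Hltd Ha Hc1 x.
set Ac := [set t | forall i, U i t <= alpha i].
have mAc : measurable Ac.
  have -> : Ac = \bigcap_(i in setT) [set t | U i t <= alpha i].
    apply/seteqP; split=> t /= H.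
      by move=> i _; exact: H.
    by move=> i; exact: H.
  by apply: fin_bigcap_measurable; [exact: finite_finset|move=> i _; exact: mle].
have EA : [set t | exists i, alpha i < U i t] = ~` Ac.
  apply/seteqP; split=> t /=.
    by move=> [i Hi] H; move: (H i); rewrite leNgt Hi.
  move=> H; apply: contrapT => H2; apply: H => i.
  by rewrite leNgt; apply/negP => Hi; apply: H2; exists i.
have EV : [set t | x < V t] = ~` [set t | V t <= x].
  by apply/seteqP; split=> t /=; rewrite ltNge => /negP.
rewrite EA EV /cond_prob.
have mVx := mle _ _ _ _ V x.
set p := prob P [set t | V t <= x].
set a := prob P Ac.
set q := prob P (Ac `&` [set t | V t <= x]).
have PC : forall B : set T, measurable B -> prob P (~` B) = 1 - prob P B.
  move=> B mB; have h := @prob_split _ _ _ P setT B measurableT mB.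
  rewrite prob_setT !setTI in h; lra.
have E1 : prob P (~` [set t | V t <= x] `&` ~` Ac) = 1 - a - p + q.
  have h1 := @prob_split _ _ _ P _ _ (measurableC mAc) mVx.
  have h2 := @prob_split _ _ _ P _ _ mVx mAc.
  rewrite PC // in h1.
  rewrite /q setIC in h2.
  rewrite (setIC [set t | V t <= x] (~` Ac)) -/p -/q in h2.
  rewrite setIC; rewrite -/a in h1; lra.
rewrite E1 PC // PC // -/a -/p.
have hal : forall i, 0 <= alpha i <= 1.
  by move=> i; have /andP[h1 h2] := Ha i; rewrite h1 ltW.
have mV1 := mle _ _ _ _ V 1.
have a_eq : a = C alpha 1.
  have h := @prob_split _ _ _ P _ _ mAc mV1.
  have hc := HC alpha 1 hal.
  rewrite ler01 lexx in hc; have {}hc := hc isT.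
  have h0 : prob P (Ac `&` ~` [set t | V t <= 1]) <= 0.
    have -> : 0 = prob P (~` [set t | V t <= 1]).
      by rewrite PC // HV ?ler01 ?lexx // subrr.
    apply: (@prob_le _ _ _ P).
    - by apply: measurableI => //; apply: measurableC.
    - exact: measurableC.
    - by move=> t [].
  have h0' := @prob_ge0 _ _ _ P (Ac `&` ~` [set t | V t <= 1]).
  rewrite hc; rewrite /a h; change (prob P (Ac `&` [set t | V t <= 1])) with
    (prob P [set t | (forall i, U i t <= alpha i) /\ V t <= 1]); lra.
have a_lt1 : 1 - a > 0 by rewrite a_eq subr_gt0.
have q_ge0 : 0 <= q by exact: prob_ge0.
suff key : p * a <= q.
  rewrite ler_pdivlMr //; nra.
have p_ge0 : 0 <= p by exact: prob_ge0.
have a_ge0 : 0 <= a by exact: prob_ge0.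
have [xlt0|xge0] := ltP x 0.
  have : p <= 0.
    rewrite -(HV 0) ?lexx ?ler01 //.
    apply: (@prob_le _ _ _ P) => //; first exact: mle.
    by move=> t /= ?; apply: le_trans (ltW xlt0).
  move=> hp; have -> : p = 0 by apply/eqP; rewrite eq_le hp p_ge0.
  by rewrite mul0r.
have [xgt1|xle1] := ltP 1 x.
  have hp : 1 <= p.
    rewrite -{1}(HV 1) ?lexx ?ler01 //.
    apply: (@prob_le _ _ _ P) => //.
    by move=> t /= ?; apply: le_trans (ltW xgt1).
  have hp1 : p <= 1.
    rewrite -(@prob_setT _ _ _ P); apply: (@prob_le _ _ _ P) => //.
  have -> : p = 1 by apply/eqP; rewrite eq_le hp hp1.
  rewrite mul1r a_eq (HC alpha 1 hal) ?lexx ?ler01 //.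
  apply: (@prob_le _ _ _ P) => //; try (apply: measurableI => //).
  by move=> t /= [h1 h2]; split => //; apply: le_trans (ltW xgt1).
have hx : 0 <= x <= 1 by rewrite xge0 xle1.
have pE : p = x by rewrite /p HV.
have qE : q = C alpha x by rewrite (HC alpha x hal hx).
rewrite pE qE a_eq.
have [x0|xgt0] := eqVneq x 0.
  by move: q_ge0; rewrite qE x0 mul0r.
have xpos : 0 < x by rewrite lt_neqAle eq_sym xgt0 xge0.
have := Hltd alpha hal x 1 xpos xle1 (lexx 1).
by rewrite divr1 ler_pdivlMr // mulrC.
Qed.
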